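(* Let $(E,\mathcal{E},\nu)$ be a $\sigma$-finite measure space, $\phi$ a Young function satisfying the $\Delta_2$-condition, $w$ a weight function, and $\Psi:E\to E$ a non-singular measurable transformation inducing a composition operator $C_\Psi f=f\circ\Psi$ on the Orlicz-Lorentz space $L_{(\phi,w)}$. Let $m\ge0$ be an integer and $\nu_m=\nu\circ\Psi^{-m}$. Then $\mathcal{N}(C_\Psi^m)=\mathcal{N}(C_\Psi^{m+1})$ if and only if the measures $\nu_m$ and $\nu_{m+1}$ are equivalent.
   Context: A Young function is a convex $\phi:[0,\infty)\to[0,\infty)$ with $\phi(x)=0\iff x=0$ and $\lim_{x\to\infty}\phi(x)=\infty$; $\Delta_2$-condition: $\phi(2x)\le k\phi(x)$ for some $k>0$ and all $x>0$. A weight function is a non-increasing locally integrable $w:(0,\infty)\to(0,\infty)$ with $\int_0^\infty w=\infty$. For measurable $f$, $\nu_f(s)=\nu\{|f|>s\}$, $f^*(t)=\inf\{s>0:\nu_f(s)\le t\}$; $L_{(\phi,w)}$ is the space of measurable $f:E\to\mathbb{C}$ with $\int_0^\infty\phi(\alpha f^*(t))w(t)\,dt<\infty$ for some $\alpha>0$, with Luxemburg norm $\|f\|=\inf\{\epsilon>0:\int_0^\infty\phi(f^*(t)/\epsilon)w(t)dt\le1\}$. $\Psi$ non-singular means $\nu(\Psi^{-1}(S))=0$ whenever $\nu(S)=0$. $\nu\circ\Psi^{-m}(S)=\nu(\Psi^{-m}(S))$, $\Psi^0=\mathrm{id}$. Two measures $\nu_1,\nu_2$ are equivalent if $\nu_1\ll\nu_2\ll\nu_1$.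 $\mathcal{N}(T)$ is the kernel of $T$; $C_\Psi^m f=f\circ\Psi^m$. *)

(* Defs.v *)
From HB Require Import structures.
From mathcomp Require Import all_boot all_order all_algebra.
From mathcomp Require Import all_classical all_reals all_analysis.
From mathcomp Require complex.
Set Implicit Arguments. Unset Strict Implicit. Unset Printing Implicit Defensive.
Import Order.TTheory GRing.Theory Num.Theory.
Local Open Scope classical_set_scope.
Local Open Scope ring_scope.

Notation Cx R := (complex.complex R).

Section OL.
Context {R : realType}.

Definition cmod (z : Cx R) : R :=
  Num.sqrt (complex.Re z ^+ 2 + complex.Im z ^+ 2).

(* Young function phi : [0,oo) -> [0,oo) (values of phi on negatives irrelevant) *)
Definition young_function (phi : R -> R) : Prop :=
  [/\ (forall x, 0 <= x -> 0 <= phi x),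
      (forall x y t, 0 <= x -> 0 <= y -> 0 <= t <= 1 ->
         phi (t * x + (1 - t) * y) <= t * phi x + (1 - t) * phi y),
      (forall x, 0 <= x -> (phi x = 0 <-> x = 0)) &
      phi x @[x --> +oo] --> +oo].

Definition delta2 (phi : R -> R) : Prop :=
  exists k : R, 0 < k /\ forall x, 0 < x -> phi (2 * x) <= k * phi x.

Definition weight_function (w : R -> R) : Prop :=
  [/\ (forall t, 0 < t -> 0 < w t),
      (forall s t, 0 < s -> s <= t -> w t <= w s),
      (forall t, 0 < t -> (@lebesgue_measure R).-integrable `]0, t] (EFin \o w)) &
      (\int[@lebesgue_measure R]_(t in [set t : R | (0 < t)%R]) (w t)%:E = +oo)%E].

Definition phiE (phi : R -> R) (x : \bar R) : \bar R :=
  match x with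
  | EFin r => (phi r)%:E
  | +oo%E => +oo%E
  | -oo%E => 0%E
  end.

Context {d : measure_display} {T : measurableType d}.

Definition cmeasurable (f : T -> Cx R) : Prop :=
  measurable_fun setT (fun x => complex.Re (f x)) /\
  measurable_fun setT (fun x => complex.Im (f x)).

Definition distrib (nu : {measure set T -> \bar R}) (f : T -> Cx R) (s : R)
  : \bar R := nu [set x | s < cmod (f x)].

Definition rearr (nu : {measure set T -> \bar R}) (f : T -> Cx R) (t : R)
  : \bar R := ereal_inf [set s%:E | s in [set s : R | 0 < s /\ (distrib nu f s <= t%:E)%E]].

Definition OL_modular (phi w : R -> R) (nu : {measure set T -> \bar R})
  (f : T -> Cx R) (alpha : R) : \bar R :=
  (\int[@lebesgue_measure R]_(t in [set t : R | (0 < t)%R])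
      (phiE phi (alpha%:E * rearr nu f t) * (w t)%:E))%E.

Definition in_OL (phi w : R -> R) (nu : {measure set T -> \bar R})
  (f : T -> Cx R) : Prop :=
  cmeasurable f /\ exists alpha : R, 0 < alpha /\ (OL_modular phi w nu f alpha < +oo)%E.

(* kernel of C_Psi^m on L_(phi,w): f in L with f o Psi^m = 0 in L, i.e. nu-a.e. *)
Definition in_kernel_comp (phi w : R -> R) (nu : {measure set T -> \bar R})
  (Psi : T -> T) (m : nat) (f : T -> Cx R) : Prop :=
  in_OL phi w nu f /\ nu.-negligible [set x | f (iter m Psi x) <> complex.Complex 0 0].

Definition push_iter (nu : {measure set T -> \bar R}) (Psi : T -> T) (m : nat)
  (S : set T) : \bar R := nu (iter m Psi @^-1` S).

Definition abs_cont (mu1 mu2 : set T -> \bar R) : Prop :=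
  forall S, measurable S -> mu2 S = 0%E -> mu1 S = 0%E.

Definition equiv_measures (mu1 mu2 : set T -> \bar R) : Prop :=
  abs_cont mu1 mu2 /\ abs_cont mu2 mu1.

Definition nonsingular (nu : {measure set T -> \bar R}) (Psi : T -> T) : Prop :=
  forall S, measurable S -> nu S = 0%E -> nu (Psi @^-1` S) = 0%E.

End OL.

(* Main.v *)
Require Import Defs.
From HB Require Import structures.
From mathcomp Require Import all_boot all_order all_algebra.
From mathcomp Require Import all_classical all_reals all_analysis.
From mathcomp Require Import measurable_realfun.
Import Order.TTheory GRing.Theory Num.Theory.
Local Open Scope classical_set_scope.
Local Open Scope ring_scope.

Section H.
Context {R : realType} {d : measure_display} {T : measurableType d}.

Lemma iter_meas (Psi : T -> T) : measurable_fun setT Psi ->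
  forall n, measurable_fun setT (iter n Psi).
Proof.
move=> mP; elim=> [|n IH] /=; first exact: measurable_id.
exact: (measurableT_comp mP IH).
Qed.

Lemma meas_pre (g : T -> T) S : measurable_fun setT g -> measurable S ->
  measurable (g @^-1` S).
Proof. by move=> mg mS; rewrite -[_ @^-1` _]setTI; exact: mg. Qed.

Definition indf (A : set T) : T -> Cx R := fun x => complex.Complex (\1_A x) 0.

Lemma cmod_indf A x : cmod (indf A x) = \1_A x.
Proof.
rewrite /cmod /indf /= indicE; case: (x \in A) => /=.
  by rewrite expr1n expr0n /= addr0 sqrtr1.
by rewrite expr0n /= addr0 sqrtr0.
Qed.

Lemma indf_neq0 A x : (indf A x <> complex.Complex 0 0) <-> A x.
Proof.
rewrite /indf indicE; split.
  by case: (boolP (x \in A)) => [/set_mem //|_] /=.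
by move=> Ax; rewrite (mem_set Ax) /= => -[] /eqP; rewrite oner_eq0.
Qed.

Lemma ge0_le_integral_nm (d2 : measure_display) (U : measurableType d2) (mu : {measure set U -> \bar R}) (D : set U) (f g : U -> \bar R) :
  (forall x, D x -> (0 <= f x)%E) -> (forall x, D x -> (f x <= g x)%E) ->
  (\int[mu]_(x in D) f x <= \int[mu]_(x in D) g x)%E.
Proof.
move=> f0 fg; rewrite !ge0_integralE //; last first.
  by move=> x Dx; exact: le_trans (f0 x Dx) (fg x Dx).
apply: le_ereal_sup => _ [h hf <-]; exists h => // x; apply: le_trans (hf x) _.
rewrite !patchE; case: ifP => // /set_mem Dx; exact: fg.
Qed.

Lemma distrib_indf (nu : {measure set T -> \bar R}) A e : (0 < e)%R ->
  distrib nu (indf A) e = if (e < 1)%R then nu A else 0%E.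
Proof.
move=> e0; rewrite /distrib; under eq_set do rewrite cmod_indf.
case: ifP => e1.
  congr (nu _); apply/seteqP; split => x /=.
    by rewrite indicE; case: (boolP (x \in A)) => [/set_mem //|_]; rewrite ltNge (ltW e0).
  by move=> Ax; rewrite indicE (mem_set Ax).
rewrite (_ : [set _ | _] = set0) ?measure0 //; apply/seteqP; split => x //=.
rewrite indicE; case: (x \in A) => /=; first by rewrite e1.
by rewrite ltNge (ltW e0).
Qed.

Lemma rearr_indf_01 (nu : {measure set T -> \bar R}) A t : (0 < t)%R ->
  exists r, rearr nu (indf A) t = r%:E /\ (0 <= r <= 1)%R.
Proof.
move=> t0.
have ge0 : (0 <= rearr nu (indf A) t)%E.
  by apply: le_ereal_inf_tmp => _ [s [s0 _] <-]; rewrite lee_fin ltW.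
have le1 : (rearr nu (indf A) t <= 1%:E)%E.
  apply: ereal_inf_le; exists 1%:E => //; exists 1%R => //; split => //.
  by rewrite distrib_indf // ltxx lee_fin ltW.
exists (fine (rearr nu (indf A) t)).
have fin : rearr nu (indf A) t \is a fin_num by rewrite ge0_fin_numE // (le_lt_trans le1) // ltey.
rewrite fineK //; split => //; apply/andP; split; first by rewrite fine_ge0.
by rewrite -lee_fin fineK.
Qed.

Lemma rearr_indf_big (nu : {measure set T -> \bar R}) A t : (0 < t)%R ->
  (nu A <= t%:E)%E -> rearr nu (indf A) t = 0%E.
Proof.
move=> t0 At; apply/eqP; rewrite eq_le; apply/andP; split; last first.
  by apply: le_ereal_inf_tmp => _ [s [s0 _] <-]; rewrite lee_fin ltW.
apply/lee_addgt0Pr => e e0; rewrite add0e; apply: ereal_inf_le; exists e%:E => //.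
exists e => //; split => //; rewrite distrib_indf //; case: ifP => // _.
by rewrite lee_fin ltW.
Qed.

Lemma phi_le1 (phi : R -> R) r : young_function phi -> (0 <= r <= 1)%R -> (phi r <= phi 1)%R.
Proof.
move=> [phi0 phic phiz _] /andP[r0 r1].
have p0 : phi 0 = 0 by apply/phiz.
have := phic 1 0 r ler01 (lexx 0) (introT andP (conj r0 r1)).
rewrite mulr1 mulr0 addr0 p0 mulr0 addr0 => /le_trans; apply.
by apply: ler_piMl => //; apply: phi0.
Qed.

Lemma indf_OL (phi w : R -> R) (nu : {measure set T -> \bar R}) A :
  young_function phi -> weight_function w -> measurable A -> (nu A < +oo)%E ->
  in_OL phi w nu (indf A).
Proof.
move=> yphi [w0 _ wint _] mA nuA.
have [phi0 _ phiz _] := yphi.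
split.
  split => /=; first exact: measurable_indic.
  exact: measurable_cst.
exists 1%R; split => //.
set b := (fine (nu A) + 1)%R.
have nuAf : nu A \is a fin_num by rewrite ge0_fin_numE.
have b0 : (0 < b)%R by rewrite /b ltr_wpDl // fine_ge0.
have Ab : forall t, (b <= t)%R -> (nu A <= t%:E)%E.
  move=> t bt; rewrite -(fineK nuAf) lee_fin; apply: le_trans bt.
  by rewrite /b lerDl.
have bound : forall t, (0 < t)%R ->
  (phiE phi (1%:E * rearr nu (indf A) t) * (w t)%:E <=
   ((fun t => ((phi 1) * w t)%:E) \_ `]0%R, b]%classic) t)%E.
  move=> t t0; rewrite mul1e patchE.
  case: ifP => [_|].
    have [r [-> r01]] := rearr_indf_01 nu A t t0.
    by rewrite /= -EFinM lee_fin ler_wpM2r ?(ltW (w0 _ t0)) // phi_le1.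
  move=> tb; have bt : (b <= t)%R.
    rewrite leNgt; apply/negP => tb'; move/negP: tb; apply.
    by apply/mem_set; rewrite /= in_itv /= t0 ltW.
  have p0 : phi 0 = 0 by apply/phiz.
  by rewrite rearr_indf_big // ?Ab //= p0 mul0e.
rewrite /OL_modular.
apply: le_lt_trans.
  apply: ge0_le_integral_nm; last first.
    by move=> t t0; exact: bound.
  move=> t t0; apply: mule_ge0; last by rewrite lee_fin ltW ?w0.
  have [r [-> /andP[r0 _]]] := rearr_indf_01 nu A t t0.
  by rewrite mul1e /= lee_fin phi0.
rewrite -integral_mkcondr.
have -> : [set t : R | (0 < t)%R] `&` `]0%R, b]%classic = `]0%R, b]%classic.
  apply/seteqP; split => x; first by case.
  move=> H; split => //; move: H; rewrite /= in_itv /=; by case/andP.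
have /integrableP[mw wfin] := wint b b0.
rewrite (_ : (fun x => (phi 1 * w x)%:E) = (fun x => (phi 1)%:E * (w x)%:E)%E); last by apply/funext => x; rewrite EFinM.
rewrite ge0_integralZl_EFin //; last by apply: phi0.
- rewrite ltey_eq; apply/orP; left; apply: fin_numM => //.
  rewrite ge0_fin_numE; last by apply: integral_ge0 => x /=; rewrite in_itv /= => /andP[x0 _]; rewrite lee_fin ltW ?w0.
  apply: le_lt_trans wfin; rewrite le_eqVlt; apply/orP; left; apply/eqP.
  apply: eq_integral => x; rewrite inE /= in_itv /= => /andP[x0 _].
  by rewrite gtr0_norm ?w0.
- by move=> x; rewrite /= in_itv /= => /andP[x0 _]; rewrite lee_fin ltW ?w0.
Qed.
End H.

Theorem lemma3p2 (R : realType) (d : measure_display) (T : measurableType d)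
  (nu : {measure set T -> \bar R}) (phi w : R -> R) (Psi : T -> T) (m : nat) :
  sigma_finite setT nu ->
  young_function phi -> delta2 phi -> weight_function w ->
  measurable_fun setT Psi -> nonsingular nu Psi ->
  (forall f : T -> Cx R, in_OL phi w nu f -> in_OL phi w nu (f \o Psi)) ->
  ((forall f : T -> Cx R,
      in_kernel_comp phi w nu Psi m f <-> in_kernel_comp phi w nu Psi m.+1 f)
   <-> equiv_measures (push_iter nu Psi m) (push_iter nu Psi m.+1)).
Proof.
move=> sf yphi _ ww mPsi ns _.
have mI := iter_meas _ mPsi.
have pre_m1 (S : set T) : iter m.+1 Psi @^-1` S = Psi @^-1` (iter m Psi @^-1` S).
  by apply/funext => x; rewrite /preimage /= -iterS iterSr.
have abs1 : abs_cont (push_iter nu Psi m.+1) (push_iter nu Psi m).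
  move=> S mS; rewrite /push_iter pre_m1 => h; apply: ns => //; exact: meas_pre.
split.
- move=> Hk; split => // S mS h0.
  rewrite /push_iter in h0 *.
  have [F FT Ffin] := sf.
  have eqS : iter m Psi @^-1` S = \bigcup_i (iter m Psi @^-1` (S `&` F i)).
    by rewrite -preimage_bigcup -setI_bigcupr -FT setIT.
  apply/(negligibleP _ (meas_pre _ _ (mI m) mS)).
  rewrite eqS; apply: negligible_bigcup => i.
  have [mFi Fifin] := Ffin i.
  have mAi : measurable (S `&` F i) by exact: measurableI.
  have k1 : in_kernel_comp phi w nu Psi m.+1 (indf (S `&` F i)).
    split.
      apply: indf_OL => //; apply: le_lt_trans Fifin.
      by apply: le_measure; rewrite ?inE //; exact: subIsetr.
    exists (iter m.+1 Psi @^-1` S); split => //; first exact: meas_pre.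
    by move=> x /= /(proj1 (indf_neq0 _ _)) [] .
  have [_ [N [mN N0 sub]]] := (Hk _).2 k1.
  exists N; split => // x Hx; apply: sub; exact/indf_neq0.
- move=> [abs0 _] f; split.
  + move=> [fOL [N [mN N0 sub]]]; split => //.
    exists (Psi @^-1` N); split; [exact: meas_pre | exact: ns | ].
    by move=> x /= Hx; apply: sub => /=; rewrite -iterSr.
  + move=> [fOL Hn]; split => //.
    have [[mRe mIm] _] := fOL.
    set Z := [set y | f y <> complex.Complex 0 0].
    have mZ : measurable Z.
      have -> : Z = ((fun y => complex.Re (f y)) @^-1` [set~ 0%R]) `|`
                    ((fun y => complex.Im (f y)) @^-1` [set~ 0%R]).
        apply/seteqP; split => y /=; rewrite /Z /=; case: (f y) => a b /=.
          move=> H; apply/not_andP => -[a0 b0]; apply: H; by rewrite a0 b0.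
        by case=> H [] ea eb; apply: H.
      apply: measurableU.
        rewrite -[X in measurable X]setTI; apply: mRe => //.
        exact: measurableC (measurable_set1 _).
      rewrite -[X in measurable X]setTI; apply: mIm => //.
      exact: measurableC (measurable_set1 _).
    have h1 : nu (iter m.+1 Psi @^-1` Z) = 0%E.
      exact: (proj1 (negligibleP _ (meas_pre _ _ (mI m.+1) mZ)) Hn).
    have := abs0 Z mZ h1; rewrite /push_iter => h2.
    exact/(negligibleP _ (meas_pre _ _ (mI m) mZ)).
Qed.
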